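(* Every quasi-normal operator $T\in\mathcal{L}(\mathcal{H})$ with closed range is an SD operator.
   Context: $\mathcal{H}$ is a Hilbert space, $\mathcal{L}(\mathcal{H})$ the bounded operators on it. $T$ is quasi-normal if $T$ commutes with $T^*T$. For $T$ with closed range, $T^\dagger$ is its Moore–Penrose inverse (unique solution of $TT^\dagger T=T$, $T^\dagger TT^\dagger=T^\dagger$, $(T^\dagger T)^*=T^\dagger T$, $(TT^\dagger)^*=TT^\dagger$). $T$ is SD if it has closed range and $T^*T^\dagger=T^\dagger T^*$. *)

(* Defs.v *)
From mathcomp Require Import all_boot all_order all_algebra.
From mathcomp Require Import reals.
From mathcomp.real_closed Require Import complex.
Set Implicit Arguments. Unset Strict Implicit. Unset Printing Implicit Defensive.
Import Order.TTheory GRing.Theory Num.Theory.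
Local Open Scope ring_scope.

Section Hilbert.
Variables (R : realType) (V : lmodType R[i]) (ip : V -> V -> R[i]).

Definition hnorm (x : V) : R[i] := sqrtC (ip x x).

Definition hconverges (u : nat -> V) (l : V) : Prop :=
  forall e : R[i], 0 < e -> exists N : nat,
    forall n : nat, (N <= n)%N -> hnorm (u n - l) < e.

Definition hcauchy (u : nat -> V) : Prop :=
  forall e : R[i], 0 < e -> exists N : nat,
    forall m n : nat, (N <= m)%N -> (N <= n)%N -> hnorm (u m - u n) < e.

Definition is_hilbert : Prop :=
  [/\ (forall (a : R[i]) (x y z : V), ip (a *: x + y) z = a * ip x z + ip y z),
      (forall x y : V, ip y x = (ip x y)^*),
      (forall x : V, 0 <= ip x x),
      (forall x : V, ip x x = 0 -> x = 0) &
      (forall u : nat -> V, hcauchy u -> exists l : V, hconverges u l)].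

Definition bounded_op (T : V -> V) : Prop :=
  (forall (a : R[i]) (x y : V), T (a *: x + y) = a *: T x + T y) /\
  (exists M : R[i], forall x : V, hnorm (T x) <= M * hnorm x).

Definition is_adjoint (T S : V -> V) : Prop :=
  forall x y : V, ip (T x) y = ip x (S y).

Definition closed_range (T : V -> V) : Prop :=
  forall (u : nat -> V) (y : V),
    (forall n, exists x, u n = T x) -> hconverges u y -> exists x, y = T x.

(* T commutes with T^* T, where Ts = T^* *)
Definition quasinormal (T Ts : V -> V) : Prop :=
  forall x : V, T (Ts (T x)) = Ts (T (T x)).

(* Td is the Moore--Penrose inverse of T (the four Penrose equations) *)
Definition is_MP (T Td : V -> V) : Prop :=
  [/\ bounded_op Td,
      (forall x, T (Td (T x)) = T x),
      (forall x, Td (T (Td x)) = Td x),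
      is_adjoint (Td \o T) (Td \o T) &
      is_adjoint (T \o Td) (T \o Td)].

Definition SD (T Ts : V -> V) : Prop :=
  closed_range T /\
  (forall Td : V -> V, is_MP T Td -> forall x : V, Ts (Td x) = Td (Ts x)).

End Hilbert.

(* Main.v *)
Require Import Defs.
From mathcomp Require Import all_boot all_order all_algebra.
From mathcomp Require Import reals.
From mathcomp.real_closed Require Import complex.
Import Order.TTheory GRing.Theory Num.Theory.
Local Open Scope ring_scope.

Lemma nondeg1 (R : realType) (V : lmodType R[i]) (ip : V -> V -> R[i])
  (hH : is_hilbert ip) (a b : V) : (forall v, ip a v = ip b v) -> a = b.
Proof.
case: hH => lin _ _ def _ H.
apply/eqP; rewrite -subr_eq0; apply/eqP; apply: def.
have -> : a - b = (-1) *: b + a by rewrite scaleN1r addrC.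
by rewrite lin H mulN1r addNr.
Qed.

Lemma nondeg2 (R : realType) (V : lmodType R[i]) (ip : V -> V -> R[i])
  (hH : is_hilbert ip) (a b : V) : (forall v, ip v a = ip v b) -> a = b.
Proof.
move=> H; apply: (@nondeg1 _ _ _ hH) => v.
case: hH => _ sym _ _ _.
by rewrite sym H -sym.
Qed.

Theorem mainTheorem5 (R : realType) (V : lmodType R[i]) (ip : V -> V -> R[i])
    (hH : is_hilbert ip) (T Ts : V -> V) :
  bounded_op ip T -> is_adjoint ip T Ts -> quasinormal T Ts ->
  closed_range ip T -> SD ip T Ts.
Proof.
move=> _ adj qn cr; split => // Td [_ h1 h2 hQ hP] x.
have sym : forall x y, ip y x = (ip x y)^* by case: hH.
have adjR : forall a b, ip (Ts a) b = ip a (T b).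
  by move=> a b; rewrite sym -adj -sym.
have E : forall w, Ts (T (Td w)) = Ts w.
  move=> w; apply: (@nondeg2 _ _ _ hH) => v.
  rewrite -!adj; have := hP (T v) w; rewrite /= h1 => ->; done.
have F : forall y, Td (T (Ts y)) = Ts y.
  move=> y; apply: (@nondeg2 _ _ _ hH) => v.
  have := hQ v (Ts y); rewrite /= => <-; by rewrite -adj h1 adj.
have D : forall y, T (Ts y) = T (Td (Ts (T y))).
  move=> y; apply: (@nondeg1 _ _ _ hH) => w.
  have := hP (Ts (T y)) w; rewrite /= => ->; rewrite adj (adjR (T y)) adj -qn -adjR.
  by rewrite E.
have C : T (Ts (Td x)) = T (Td (Ts x)) by rewrite D E.
by rewrite -F C h2.
Qed.
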